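(* Consider the system $x^+=f(x,u)$, $y=h(x)$ with $f:\mathcal{X}\times\mathcal{U}\to\mathcal{X}$, $h:\mathcal{X}\to\mathcal{Y}$, $\mathcal{X}\subset\mathbb{R}^n$, $\mathcal{Y}\subset\mathbb{R}^m$, $\mathcal{U}\subset\mathbb{R}^q$. Suppose: (A1) there exists an integer $p\ge1$ such that for every $x\in\mathcal{X}$ the set $[x]_{p-1}$ is either a singleton or empty; and (A2) for all $x,\hat x\in\mathcal{X}$ and all $k\ge0$, $\hat x\in[x]_k^+$ implies $[\hat x]_k^+=[x]_k^+$. With $p$ as in (A1), let $\pi(\hat x,y):=\max\{j\in\{-1,0,\ldots,p-2\}:[\hat x]_j^+\cap h^{-1}(y)\ne\emptyset\}$. Then the system $$\hat x^+\in f\big([\hat x]^+_{\pi(\hat x,y)}\cap h^{-1}(y),\,u\big)$$ is a deadbeat observer for $x^+=f(x,u)$, $y=h(x)$.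
   Context: $h^{-1}(y):=\{\eta\in\mathcal{X}:h(\eta)=y\}$; $f(S,u):=\{f(s,u):s\in S\}$; for a set $S$, $[S]_k:=\bigcup_{s\in S}[s]_k$. Define $[x]_0:=h^{-1}(h(x))$, and for $k\ge0$: $[x]_k^+:=\bigcup_{(\eta,u)\in\mathcal{X}\times\mathcal{U}:\ f(\eta,u)=x} f([\eta]_k,u)$, $[x]_{k+1}:=[x]_k^+\cap[x]_0$; additionally $[x]_{-1}^+:=\mathcal{X}$. For an input sequence $\mathbf{u}=(u_0,u_1,\ldots)$ with $u_k\in\mathcal{U}$, the solution is $\phi(0,x,\mathbf{u})=x$, $\phi(k+1,x,\mathbf{u})=f(\phi(k,x,\mathbf{u}),u_k)$. Given $g:\mathcal{X}\times\mathcal{Y}\times\mathcal{U}\rightrightarrows\mathcal{X}$, a solution of $\hat x^+\in g(\hat x,h(x),u)$ is any sequence $\psi(k,\hat x,x,\mathbf{u})$ with $\psi(0,\hat x,x,\mathbf{u})=\hat x$, $\psi(k+1,\hat x,x,\mathbf{u})\in g(\psi(k,\hat x,x,\mathbf{u}),h(\phi(k,x,\mathbf{u})),u_k)$. The system $\hat x^+\in g(\hat x,y,u)$ is a deadbeat observer for $x^+=f(x,u),\,y=h(x)$ if there is an integer $q\ge1$ such that such solutions satisfy $\psi(k,\hat x,x,\mathbf{u})=\phi(k,x,\mathbf{u})$ for all $x,\hat x\in\mathcal{X}$, all input sequences $\mathbf{u}$, and all $k\ge q$. *)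

(* Defs.v *)
(* State space X, output space Y, input space U are abstract types
   (the paper's X ⊂ R^n, Y ⊂ R^m, U ⊂ R^q play no role beyond being sets). *)
From Stdlib Require Import ZArith Lia.
Open Scope Z_scope.

Section Classes.
Context {X Y U : Type} (f : X -> U -> X) (h : X -> Y).

(* cls k x z  <->  z ∈ [x]_k ;  clsplus k x z <-> z ∈ [x]_k^+  (k >= 0) *)
Fixpoint cls (k : nat) (x z : X) : Prop :=
  match k with
  | O => h z = h x
  | S k' => (exists (eta : X) (u : U), f eta u = x /\
               exists s, cls k' eta s /\ z = f s u) /\ h z = h x
  end.

Definition clsplus (k : nat) (x z : X) : Prop :=
  exists (eta : X) (u : U), f eta u = x /\ exists s, cls k eta s /\ z = f s u.

(* [x]_j^+ for integer j >= -1, with [x]_{-1}^+ := X (the whole state space) *)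
Definition clsplusZ (j : Z) (x z : X) : Prop :=
  if j <? 0 then True else clsplus (Z.to_nat j) x z.

Definition is_pi (p : nat) (xh : X) (y : Y) (j : Z) : Prop :=
  -1 <= j <= Z.of_nat p - 2 /\
  (exists z, clsplusZ j xh z /\ h z = y) /\
  (forall j', -1 <= j' <= Z.of_nat p - 2 ->
     (exists z, clsplusZ j' xh z /\ h z = y) -> j' <= j).

Definition observer_map (p : nat) (xh : X) (y : Y) (u : U) (xn : X) : Prop :=
  exists j, is_pi p xh y j /\
    exists s, clsplusZ j xh s /\ h s = y /\ xn = f s u.

Fixpoint phi (k : nat) (x : X) (us : nat -> U) : X :=
  match k with
  | O => x
  | S k' => f (phi k' x us) (us k')
  end.
End Classes.

Definition deadbeat_observer {X Y U : Type} (f : X -> U -> X) (h : X -> Y)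
    (g : X -> Y -> U -> X -> Prop) : Prop :=
  exists q : nat, (1 <= q)%nat /\
    forall (x xh : X) (us : nat -> U) (psi : nat -> X),
      psi O = xh ->
      (forall k, g (psi k) (h (phi f k x us)) (us k) (psi (S k))) ->
      forall k, (q <= k)%nat -> psi k = phi f k x us.

(* Main.v *)
Require Import Defs.
From Stdlib Require Import ZArith Lia.

Section S.
Context {X Y U : Type} (f : X -> U -> X) (h : X -> Y).

Lemma cls_mono1 : forall k x z, cls f h (S k) x z -> cls f h k x z.
Proof.
  induction k as [|k IH]; intros x z H.
  - simpl in H. simpl. tauto.
  - destruct H as [[eta [u [He [s [Hs Hz]]]]] Hh].
    split; [|exact Hh].
    exists eta, u; split; [exact He|]. exists s; split; [apply IH; exact Hs|exact Hz].
Qed.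

Lemma clsplus_mono : forall n m x z, (m <= n)%nat -> clsplus f h n x z -> clsplus f h m x z.
Proof.
  intros n m x z Hle; induction Hle; intros H; [exact H|].
  apply IHHle. destruct H as [eta [u [He [s [Hs Hz]]]]].
  exists eta, u; split; [exact He|]. exists s; split; [apply cls_mono1; exact Hs|exact Hz].
Qed.

Lemma clsplusZ_mono : forall j j' x z, (j <= j')%Z ->
  clsplusZ f h j' x z -> clsplusZ f h j x z.
Proof.
  intros j j' x z Hle. unfold clsplusZ.
  destruct (Z.ltb_spec j 0); [tauto|].
  destruct (Z.ltb_spec j' 0); [lia|].
  apply clsplus_mono. lia.
Qed.

Lemma cls_lift : forall m s xk u, cls f h m s xk -> clsplus f h m (f s u) (f xk u).
Proof. intros. exists s, u; split; [reflexivity|]. exists xk; split; auto. Qed.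

Variable A2 : forall (x xh : X) (k : nat), clsplus f h k x xh ->
     forall z, clsplus f h k xh z <-> clsplus f h k x z.

Lemma K : forall j psi a b, (-1 <= j)%Z -> clsplusZ f h j psi a -> clsplusZ f h j psi b ->
  h a = h b -> cls f h (Z.to_nat (j + 1)) a b.
Proof.
  intros j psi a b Hj Ha Hb Hab. unfold clsplusZ in *.
  destruct (Z.ltb_spec j 0).
  - replace (j + 1)%Z with 0%Z by lia. simpl. congruence.
  - replace (Z.to_nat (j + 1)) with (S (Z.to_nat j)) by lia.
    simpl. split; [|congruence].
    apply (A2 psi a (Z.to_nat j) Ha). exact Hb.
Qed.
End S.

Theorem theorem4 {X Y U : Type} (f : X -> U -> X) (h : X -> Y) (p : nat) :
  (1 <= p)%nat ->
  (* (A1): [x]_{p-1} is a singleton or empty *)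
  (forall x z z', cls f h (p - 1) x z -> cls f h (p - 1) x z' -> z = z') ->
  (* (A2) *)
  (forall (x xh : X) (k : nat), clsplus f h k x xh ->
     forall z, clsplus f h k xh z <-> clsplus f h k x z) ->
  deadbeat_observer f h (observer_map f h p).
Proof.
  intros Hp A1 A2.
  exists p; split; [exact Hp|].
  intros x xh us psi H0 Hstep.
  set (c := fun k : nat => Z.min (Z.of_nat k - 1) (Z.of_nat p - 2)).
  assert (Inv : forall k, clsplusZ f h (c k) (psi k) (phi f k x us)).
  { induction k as [|k IH].
    - unfold clsplusZ, c. destruct (Z.ltb_spec (Z.min (Z.of_nat 0 - 1) (Z.of_nat p - 2)) 0);
        [exact I | lia].
    - destruct (Hstep k) as [j [[Hjr [_ Hmax]] [s [Hs [Hhs Hn]]]]].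
      assert (Hcj : (c k <= j)%Z).
      { apply Hmax. unfold c; lia. exists (phi f k x us); split; [exact IH|reflexivity]. }
      assert (Hs' : clsplusZ f h (c k) (psi k) s) by (eapply clsplusZ_mono; eauto).
      assert (HK := K f h A2 (c k) (psi k) s (phi f k x us) ltac:(unfold c; lia) Hs' IH Hhs).
      apply (clsplusZ_mono f h _ (c k + 1)); [unfold c; lia|].
      unfold clsplusZ. destruct (Z.ltb_spec (c k + 1) 0); [exact I|].
      rewrite Hn. simpl. apply cls_lift. exact HK. }
  intros k Hk. destruct k as [|k]; [lia|].
  destruct (Hstep k) as [j [[Hjr [_ Hmax]] [s [Hs [Hhs Hn]]]]].
  assert (Hck : c k = (Z.of_nat p - 2)%Z) by (unfold c; cbv beta; rewrite Z.min_r; lia).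
  assert (IH := Inv k). rewrite Hck in IH.
  assert (Hj : j = (Z.of_nat p - 2)%Z).
  { assert ((Z.of_nat p - 2) <= j)%Z; [|lia].
    apply Hmax; [lia|]. exists (phi f k x us); split; [exact IH|reflexivity]. }
  subst j.
  assert (E : Z.to_nat (Z.of_nat p - 2 + 1) = (p - 1)%nat) by lia.
  assert (H1 := K f h A2 (Z.of_nat p - 2) _ _ _ ltac:(lia) IH Hs (eq_sym Hhs)).
  assert (H2 := K f h A2 (Z.of_nat p - 2) _ _ _ ltac:(lia) IH IH eq_refl).
  rewrite E in H1, H2.
  assert (Es := A1 _ _ _ H1 H2).
  rewrite Hn, Es. reflexivity.
Qed.
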